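(* Let $G$ be a groupoid that is a generalised inflation of its subgroupoid $U$, and suppose that $G$ is a right modular groupoid and that $U$ is right cancellative (i.e. for $a,b,c \in U$, $ac = bc$ implies $a = b$). Then $G$ is an inflation of $U$.
   Context: A groupoid is a set with a binary operation, written $xy$ or $x\cdot y$. A groupoid $G$ is right modular if $xy\cdot z = zy\cdot x$ for all $x,y,z \in G$. A groupoid $G$ is an inflation of its subgroupoid $U$ if $G = \bigcup_{u\in U} G_u$ where (1) $u \in G_u$ for all $u\in U$, (2) $G_u \cap G_v = \emptyset$ for $u \ne v$, and (3) $x \in G_u$, $y\in G_v$ implies $xy = uv$. A groupoid $G$ is a generalised inflation of its subgroupoid $U$ if $G = \bigcup_{u\in U} G_u$ where (1) $u \in G_u$ for all $u \in U$, (2) $G_u\cap G_v=\emptyset$ for $u\neq v$, (3) for every $x \in G$ there are maps $\alpha_x, \beta_x : U \to U$ such that for all $x \in G_u$ and $y \in G_v$ ($u,v\in U$) one has $xy = \alpha_x(v)\cdot \beta_y(u)$ (product computed in $U$), and (4) for $u \in U$, $\alpha_u$ and $\beta_u$ are both the constant map on $U$ with value $u$. *)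

(* Defs.v *)
(* A groupoid is a carrier type G with a binary
   operation mul.
   A family of blocks (G_u)_{u in U} is given by Gb : G -> G -> Prop,
   Gb u x meaning x \in G_u (only indices u with U u matter). *)

Definition right_modular {G : Type} (mul : G -> G -> G) : Prop :=
  forall x y z : G, mul (mul x y) z = mul (mul z y) x.

Definition subgroupoid {G : Type} (mul : G -> G -> G) (U : G -> Prop) : Prop :=
  forall u v, U u -> U v -> U (mul u v).

Definition right_cancellative_on {G : Type} (mul : G -> G -> G) (U : G -> Prop) : Prop :=
  forall a b c, U a -> U b -> U c -> mul a c = mul b c -> a = b.

Definition block_decomposition {G : Type} (U : G -> Prop) (Gb : G -> G -> Prop) : Prop :=
  (forall u, U u -> Gb u u) /\
  (forall u v x, U u -> U v -> u <> v -> Gb u x -> Gb v x -> False) /\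
  (forall x, exists u, U u /\ Gb u x).

Definition inflation {G : Type} (mul : G -> G -> G) (U : G -> Prop) : Prop :=
  exists Gb : G -> G -> Prop,
    block_decomposition U Gb /\
    (forall u v x y, U u -> U v -> Gb u x -> Gb v y -> mul x y = mul u v).

(* alpha x, beta x : U -> U are represented as functions G -> G mapping U into U
   (their values outside U are irrelevant). *)
Definition generalised_inflation {G : Type} (mul : G -> G -> G) (U : G -> Prop) : Prop :=
  exists (Gb : G -> G -> Prop) (alpha beta : G -> G -> G),
    block_decomposition U Gb /\
    (forall x v, U v -> U (alpha x v)) /\
    (forall x v, U v -> U (beta x v)) /\
    (forall u v x y, U u -> U v -> Gb u x -> Gb v y ->
        mul x y = mul (alpha x v) (beta y u)) /\
    (forall u w, U u -> U w -> alpha u w = u /\ beta u w = u).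

(* Main.v *)
Require Import Defs.
From Stdlib Require Import Classical.

Theorem theorem1 (G : Type) (mul : G -> G -> G) (U : G -> Prop) :
  subgroupoid mul U ->
  generalised_inflation mul U ->
  right_modular mul ->
  right_cancellative_on mul U ->
  inflation mul U.
Proof.
  intros Hsub [Gb [al [be [[H1 [H2 H3]] [Hal [Hbe [Hmul Hid]]]]]]] Hmod Hc.
  assert (A : forall u x w, U u -> Gb u x -> U w -> mul w x = mul w (be x u)).
  { intros u x w Hu Hx Hw.
    assert (Ewx : mul w x = mul w (be x w)).
    { rewrite (Hmul w u w x Hw Hu (H1 w Hw) Hx). now rewrite (proj1 (Hid w u Hw Hu)). }
    assert (Eux : mul u x = mul u (be x u)).
    { rewrite (Hmul u u u x Hu Hu (H1 u Hu) Hx). now rewrite (proj1 (Hid u u Hu Hu)). }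
    apply (Hc _ _ u).
    - rewrite Ewx. apply Hsub; auto.
    - apply Hsub; auto.
    - exact Hu.
    - rewrite Hmod, Eux, Hmod. reflexivity. }
  exists (fun e x => U e /\ exists u, U u /\ Gb u x /\ be x u = e).
  split; [split; [|split]|].
  - intros u Hu. split; [exact Hu|]. exists u. repeat split; auto. apply (Hid u u Hu Hu).
  - intros e1 e2 x He1 He2 Hne [_ [u1 [Hu1 [Hx1 E1]]]] [_ [u2 [Hu2 [Hx2 E2]]]].
    destruct (H3 x) as [u0 _].
    assert (u1 = u2).
    { destruct (Classical_Prop.classic (u1 = u2)) as [e|n]; [exact e|].
      exfalso. exact (H2 u1 u2 x Hu1 Hu2 n Hx1 Hx2). }
    subst. congruence.
  - intros x. destruct (H3 x) as [u [Hu Hx]]. exists (be x u). split.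
    + apply Hbe; auto.
    + split; [apply Hbe; auto|]. exists u. auto.
  - intros e1 e2 x y He1 He2 [_ [u [Hu [Hx Ex]]]] [_ [v [Hv [Hy Ey]]]].
    assert (Uxy : U (mul x y)).
    { rewrite (Hmul u v x y Hu Hv Hx Hy). apply Hsub; [apply Hal|apply Hbe]; auto. }
    apply (Hc _ _ u Uxy (Hsub _ _ He1 He2) Hu).
    rewrite Hmod. rewrite (A v y u Hv Hy Hu), Ey.
    rewrite (A u x (mul u e2) Hu Hx (Hsub _ _ Hu He2)), Ex.
    apply Hmod.
Qed.
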